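(* Let $(B,\omega)$ be a finite rank, perfectly ordered, well-telescoped Bratteli diagram, with associated bijection $\sigma:\widetilde V\to\overline V$, and let $\mathcal H$ be its associated graph. (1) If $B$ is simple, then $\mathcal H$ is strongly connected. (2) If $B$ belongs to the class $\mathcal A$, then $\mathcal H$ is weakly connected (for any two vertices $t,t'$ there is a directed path from $t$ to $t'$ or from $t'$ to $t$).
   Context: A Bratteli diagram $B$ has levels $V_n$ ($V_0=\{v_0\}$) and edge sets $E_n$ from $V_{n-1}$ to $V_n$ with source/range maps $s,r$; $X_B$ is its path space; standing assumption: $B$ aperiodic. Incidence matrix $F_n=(f^{(n)}_{v,w})_{v\in V_{n+1},w\in V_n}$: number of edges from $w$ to $v$. $B$ is simple if for every $n$ there is $m>n$ with every vertex of $V_n$ connected by a path to every vertex of $V_m$. An ordering $\omega$ is a linear order on each $r^{-1}(v)$; maximal/minimal paths, Vershik map $\varphi_\omega$ and perfectness are as usual (a perfect ordering is one admitting a Vershik map, i.e. a homeomorphism extending the successor map and sending maximal paths onto minimal paths). When $V_n=V$ for all $n\ge1$, $w(v,m,n)$ ($v\in V_n$, $1\le m<n$) is the word of sources (in $V$) of the paths from level $m$ to $v$ listed in increasing lexicographic order. A path is vertical if it passes through the same vertex at every level $\ge1$. A perfectly ordered finite rank diagram $(B,\omega)$ of rank $d$ is well-telescoped if: (i) $|r^{-1}(v)|\ge2$ for all $v\ne v_0$; (ii) $V_n=V$ for all $n\ge1$ with $|V|=d$; (iii) all $\omega$-maximal and $\omega$-minimal paths are vertical; $\widetilde V$ ($\overline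 V$) denotes the set of vertices through which the maximal (minimal) paths pass and $M_{\tilde v}$ ($m_{\bar v}$) the maximal (minimal) path through $\tilde v\in\widetilde V$ ($\bar v\in\overline V$); (iv) for each $w\in V$ there are $\tilde v(w)\in\widetilde V$, $\bar v(w)\in\overline V$ such that for every $n\ge2$ the maximal edge of $r^{-1}(w)$, $w\in V_n$, has source $\tilde v(w)$ and the minimal edge has source $\bar v(w)$; (v) with $\sigma:\widetilde V\to\overline V$ the bijection defined by $\varphi_\omega(M_{\tilde v})=m_{\sigma(\tilde v)}$, whenever a word $\tilde v\bar v$ with $\tilde v\in\widetilde V$, $\bar v\in\overline V$ occurs as a subword of some $w(u,m,n)$ with $n>m\ge1$, then $\bar v=\sigma(\tilde v)$. Associated graph: $W_{\tilde v}=\{w\in V:\tilde v(w)=\tilde v\}$, $W'_{\bar v}=\{w\in V:\bar v(w)=\bar v\}$, $[\bar v,\tilde v]=W'_{\bar v}\cap W_{\tilde v}$. $\mathcal H$ is the directed graph with vertex set $\{[\bar v,\tilde v]:[\bar v,\tilde v]\ne\emptyset\}$ and a directed edge from $[\bar v,\tilde v]$ to $[\bar v_1,\tilde v_1]$ iff $\sigma(\tilde v)=\bar v_1$ (loops allowed). Class $\mathcal A$: diagrams with, for all $n\ge1$, $F_n$ of block lower-triangular form with diagonal blocks $A^{(1)}_n,\dots,A^{(k)}_n,C_n$ and last block row $(B^{(1)}_n,\dots,B^{(k)}_n,C_n)$, all other blocks zero, where each $A^{(i)}_n$ is $d_i\times d_i$ with $d_i$ independent of $n$, $C_n$ has size independent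 of $n$, all $A^{(i)}_n,B^{(i)}_n,C_n$ are strictly positive, and some fixed row in the last block row is strictly positive for every $n$; such a diagram is said to have $k$ minimal components. *)

(* Defs.v *)
From mathcomp Require Import all_boot.
Set Implicit Arguments.
Unset Strict Implicit.
Unset Printing Implicit Defensive.

(* Bratteli diagrams with V_n = V for all n >= 1 (V_0 = {v0}).         *)
(* edge n is the edge set E_n (from level n-1 to level n), n >= 1;    *)
(* edge 0 is unused.  src / rng are the source / range maps; for      *)
(* n = 1 every edge has source the root v0, so src on edge 1 is        *)
(* irrelevant and never used.                                          *)
Record bratteli (V : finType) := Bratteli {
  edge : nat -> finType;
  src : forall n, edge n -> V;
  rng : forall n, edge n -> V
}.
Arguments src {V} b {n} _.
Arguments rng {V} b {n} _.

Section Diagram.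
Variables (V : finType) (B : bratteli V).

(* infinite paths: x n is an edge of E_{n+1} *)
Definition path := forall n : nat, edge B n.+1.
Definition is_path (x : path) := forall n, rng B (x n) = src B (x n.+1).
Definition XB := {x : path | is_path x}.

Definition tail_equiv (x y : XB) :=
  exists N, forall n, N <= n -> sval x n = sval y n.
Definition aperiodic :=
  forall (x : XB) (k : nat), exists f : 'I_k -> XB,
    injective f /\ forall i, tail_equiv x (f i).

(* finite paths from level m to vertex u at level n (m < n):          *)
(* p k in E_k for m < k <= n (other values of p are irrelevant).      *)
Definition finpath (m n : nat) (u : V) (p : forall k, edge B k) :=
  (forall k, m < k < n -> rng B (p k) = src B (p k.+1)) /\ rng B (p n) = u.

Definition simple :=
  forall n, exists m, n < m /\
    forall w v : V, exists p, finpath n m v p /\ (n = 0 \/ src B (p n.+1) = w).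

(* incidence matrix entry f^{(n)}_{v,w}: number of edges from w in V_n *)
(* to v in V_{n+1} *)
Definition incid (n : nat) (v w : V) : nat :=
  #|[set e : edge B n.+1 | (src B e == w) && (rng B e == v)]|.

(* class A: for n >= 1, the vertices of V_n are labelled by blocks     *)
(* 0..k-1 (the A^{(i)} blocks) and k (the C block), block sizes being   *)
(* independent of n, and F_n has the prescribed block form.            *)
Definition classA :=
  exists (k : nat) (lab : nat -> V -> 'I_k.+1),
    (forall n (i : 'I_k.+1), 1 <= n ->
        #|[set v | lab n v == i]| = #|[set v | lab 1 v == i]|) /\
    (forall n, 1 <= n -> forall v w : V,
        (val (lab n.+1 v) < k -> (0 < incid n v w) = (lab n w == lab n.+1 v)) /\
        (val (lab n.+1 v) = k -> 0 < incid n v w)) /\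
    (exists v : V, val (lab 1 v) = k).

(* Orderings.  An ordering is given by a rank function rk, injective  *)
(* on each fiber r^{-1}(v); the linear order on r^{-1}(v) is           *)
(* e < e' iff rk e < rk e'.                                           *)
Variable rk : forall n, edge B n -> nat.

Definition is_ordering :=
  forall n, 1 <= n -> forall e e' : edge B n,
    rng B e = rng B e' -> rk e = rk e' -> e = e'.

Definition emax n (e : edge B n) :=
  forall e' : edge B n, rng B e' = rng B e -> rk e' <= rk e.
Definition emin n (e : edge B n) :=
  forall e' : edge B n, rng B e' = rng B e -> rk e <= rk e'.

Definition pmax (x : XB) := forall n, emax (sval x n).
Definition pmin (x : XB) := forall n, emin (sval x n).

Definition succ_edge n (e e' : edge B n) :=
  rng B e' = rng B e /\ rk e < rk e' /\
  forall e'' : edge B n, rng B e'' = rng B e -> rk e < rk e'' -> rk e' <= rk e''.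

Definition succ_path (x y : XB) :=
  exists k, (forall j, j < k -> emax (sval x j)) /\ ~ emax (sval x k) /\
    succ_edge (sval x k) (sval y k) /\
    (forall j, k < j -> sval y j = sval x j) /\
    (forall j, j < k -> emin (sval y j)).

Definition continuous (f : XB -> XB) :=
  forall (x : XB) (N : nat), exists M, forall y : XB,
    (forall j, j < M -> sval y j = sval x j) ->
    forall j, j < N -> sval (f y) j = sval (f x) j.

Definition homeomorphism (f : XB -> XB) :=
  continuous f /\ exists g : XB -> XB,
    continuous g /\ (forall x, g (f x) = x) /\ (forall y, f (g y) = y).

Definition is_vershik (phi : XB -> XB) :=
  homeomorphism phi /\
  (forall x, ~ pmax x -> succ_path x (phi x)) /\
  (forall x, pmax x -> pmin (phi x)) /\
  (forall y, pmin y -> exists x, pmax x /\ phi x = y).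

Definition perfect := exists phi, is_vershik phi.

Definition passes (x : XB) (v : V) := exists n, rng B (sval x n) = v.
Definition vertical (x : XB) := forall n, rng B (sval x n) = rng B (sval x 0).

Definition inTV (v : V) := exists x, pmax x /\ passes x v.
Definition inBV (v : V) := exists x, pmin x /\ passes x v.

Variable phi : XB -> XB.

(* sigma(tv) = bv, i.e. phi(M_tv) = m_bv *)
Definition sigma (tv bv : V) := exists x, pmax x /\ passes x tv /\ passes (phi x) bv.

Definition lex_lt (m n : nat) (p q : forall k, edge B k) :=
  exists k, m < k <= n /\ rk (p k) < rk (q k) /\
    forall j, k < j <= n -> p j = q j.

(* the two-letter word a b is a subword (factor) of w(u,m,n) *)
Definition occurs2 (u : V) (m n : nat) (a b : V) :=
  exists p q, finpath m n u p /\ finpath m n u q /\ lex_lt m n p q /\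
    (forall r, finpath m n u r -> ~ (lex_lt m n p r /\ lex_lt m n r q)) /\
    src B (p m.+1) = a /\ src B (q m.+1) = b.

Definition tv_of (w tv : V) :=
  forall n, 2 <= n -> forall e : edge B n, rng B e = w -> emax e -> src B e = tv.
Definition bv_of (w bv : V) :=
  forall n, 2 <= n -> forall e : edge B n, rng B e = w -> emin e -> src B e = bv.

Definition well_telescoped :=
  (forall n, 1 <= n -> forall v : V, 2 <= #|[set e : edge B n | rng B e == v]|) /\
  (* (ii) is built into the representation *)
  (forall x, pmax x -> vertical x) /\ (forall x, pmin x -> vertical x) /\
  (forall w : V, exists tv bv, inTV tv /\ inBV bv /\ tv_of w tv /\ bv_of w bv) /\
  (forall (u : V) m n, 1 <= m -> m < n -> forall tv bv, inTV tv -> inBV bv ->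
     occurs2 u m n tv bv -> sigma tv bv).

(* The associated graph H: vertices are pairs (bv, tv) with [bv,tv] nonempty *)
Definition cell (bv tv w : V) := tv_of w tv /\ bv_of w bv.
Definition Hvert (t : V * V) :=
  inBV t.1 /\ inTV t.2 /\ exists w, cell t.1 t.2 w.
Definition Hedge (t t' : V * V) := sigma t.2 t'.1.

Inductive Hreach : V * V -> V * V -> Prop :=
| Hreach_refl t : Hvert t -> Hreach t t
| Hreach_step t t' t'' : Hvert t -> Hvert t' -> Hedge t t' -> Hreach t' t'' ->
    Hreach t t''.

Definition strongly_connected :=
  forall t t', Hvert t -> Hvert t' -> Hreach t t'.
Definition weakly_connected :=
  forall t t', Hvert t -> Hvert t' -> Hreach t t' \/ Hreach t' t.

End Diagram.

(* Main.v *)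
Require Import Defs.
From mathcomp Require Import all_boot.
From Stdlib Require Import Classical IndefiniteDescription Eqdep_dec Lia.
From mathcomp Require Import zify.
Set Implicit Arguments.
Unset Strict Implicit.
Unset Printing Implicit Defensive.

Definition upd (F : nat -> Type) (f : forall j, F j) (i : nat) (a : F i) : forall j, F j :=
  fun j => match PeanoNat.Nat.eq_dec i j with
           | left E => eq_rect i F a j E
           | right _ => f j end.

Lemma upd_same (F : nat -> Type) f i (a : F i) : upd f a i = a.
Proof.
rewrite /upd; case: (PeanoNat.Nat.eq_dec i i) => [E|//].
by rewrite (UIP_refl_nat _ E).
Qed.

Lemma upd_other (F : nat -> Type) f i (a : F i) j : i <> j -> upd f a j = f j.
Proof. by rewrite /upd; case: (PeanoNat.Nat.eq_dec i j). Qed.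

Section Main.
Variables (V : finType) (B : bratteli V) (rk : forall n, edge B n -> nat)
  (phi : XB B -> XB B).
Hypothesis Hord : is_ordering rk.
Hypothesis Hfib : forall n, 1 <= n -> forall v : V,
  2 <= #|[set e : edge B n | rng B e == v]|.

Lemma fib_ex n : 1 <= n -> forall v, exists e : edge B n, rng B e = v.
Proof.
move=> Hn v; have /card_gt1P [x [y [Hx _ _]]] := Hfib Hn v.
by exists x; move: Hx; rewrite inE => /eqP.
Qed.

Lemma exmax n : 1 <= n -> forall v, exists e : edge B n, rng B e = v /\ emax rk e.
Proof.
move=> Hn v; have [e0 He0] := fib_ex Hn v.
case: (@arg_maxnP _ e0 (fun e => rng B e == v) (@rk n)); first by apply/eqP.
move=> e /eqP He Hmax; exists e; split => // e' He'.
by apply: Hmax; apply/eqP; rewrite He' He.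
Qed.

Lemma exmin n : 1 <= n -> forall v, exists e : edge B n, rng B e = v /\ emin rk e.
Proof.
move=> Hn v; have [e0 He0] := fib_ex Hn v.
case: (@arg_minnP _ e0 (fun e => rng B e == v) (@rk n)); first by apply/eqP.
move=> e /eqP He Hmin; exists e; split => // e' He'.
by apply: Hmin; apply/eqP; rewrite He' He.
Qed.

Lemma rk_eq n (e e' : edge B n) : 1 <= n -> rng B e = rng B e' -> rk e = rk e' -> e = e'.
Proof. move=> Hn; exact: Hord. Qed.

Lemma pred_exists n (e0 e : edge B n) : rng B e0 = rng B e -> rk e0 < rk e ->
  exists p, rk e0 <= rk p /\ succ_edge rk p e.
Proof.
move=> Hr Hlt.
case: (@arg_maxnP _ e0 (fun x => (rng B x == rng B e) && (rk x < rk e)) (@rk n)).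
  by rewrite Hr eqxx Hlt.
move=> p /andP [/eqP Hp Hpl] Hmax; exists p; split.
  by apply: Hmax; rewrite Hr eqxx Hlt.
split; first by []. split; first by [].
move=> e'' He'' Hlt''.
case: (leqP (rk e) (rk e'')) => // H.
have := Hmax e''; rewrite He'' Hp eqxx H => /(_ isT) Hle.
by have := leq_trans Hlt'' Hle; rewrite ltnn.
Qed.

Hypothesis Hvmax : forall x, pmax rk x -> vertical x.
Hypothesis Hvmin : forall x, pmin rk x -> vertical x.

Lemma maxpath tv : inTV rk tv -> exists M : XB B, pmax rk M /\ forall j, rng B (sval M j) = tv.
Proof.
move=> [x [Hx [n Hn]]]; exists x; split => // j.
have Hv := Hvmax Hx; by rewrite Hv -Hn Hv.
Qed.

Lemma minpath bv : inBV rk bv -> exists M : XB B, pmin rk M /\ forall j, rng B (sval M j) = bv.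
Proof.
move=> [x [Hx [n Hn]]]; exists x; split => // j.
have Hv := Hvmin Hx; by rewrite Hv -Hn Hv.
Qed.

Lemma tvT tv : inTV rk tv -> tv_of rk tv tv.
Proof.
move=> /maxpath [M [HM HMr]] [|[|i]] // _ e He Hm.
have -> : e = sval M i.+1.
  apply: rk_eq => //; first by rewrite He HMr.
  apply/eqP; rewrite eqn_leq; apply/andP; split.
    by apply: (HM i.+1); rewrite HMr.
  by apply: Hm; rewrite HMr.
by rewrite -(svalP M i) HMr.
Qed.

Lemma bvB bv : inBV rk bv -> bv_of rk bv bv.
Proof.
move=> /minpath [M [HM HMr]] [|[|i]] // _ e He Hm.
have -> : e = sval M i.+1.
  apply: rk_eq => //; first by rewrite He HMr.
  apply/eqP; rewrite eqn_leq; apply/andP; split.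
    by apply: Hm; rewrite HMr.
  by apply: (HM i.+1); rewrite HMr.
by rewrite -(svalP M i) HMr.
Qed.


Hypothesis Hsucc : forall x, ~ pmax rk x -> succ_path rk x (phi x).
Hypothesis Hup : forall i, 1 <= i -> forall w, exists e : edge B i.+1, src B e = w.

Lemma step_core (M : XB B) tv bv h (e e' : edge B h.+2) K0 :
  pmax rk M -> (forall j, rng B (sval M j) = tv) ->
  (forall y : XB B, (forall j, j < K0 -> sval y j = sval M j) ->
      sval (phi y) 0 = sval (phi M) 0) ->
  K0 <= h -> 1 <= h -> succ_edge rk e e' -> tv_of rk (src B e) tv ->
  bv_of rk (src B e') bv -> bv_of rk bv bv ->
  rng B (sval (phi M) 0) = bv.
Proof.
move=> HM HMr Hc HK0 Hh [He'r [He'lt He'min]] Htv Hbv Hbb.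
have [g [Hg Hgmax]] := @exmax h.+1 isT (src B e).
pose up j w := odflt (sval M j) [pick x : edge B j.+1 | src B x == w].
have up_src : forall j w, 1 <= j -> src B (up j w) = w.
  move=> j w Hj; rewrite /up; case: pickP => [x /eqP //|Hn].
  have [x Hx] := Hup Hj w; by move: (Hn x); rewrite Hx eqxx.
pose vs := fix vs t := match t with 0 => rng B e | t'.+1 => rng B (up (h.+2 + t') (vs t')) end.
pose f0 := fun j => if j < h then sval M j else up j (vs (j - h.+2)).
pose x0 := upd (upd (F := fun j => edge B j.+1) f0 g) (F := fun j => edge B j.+1) e.
have x0lo : forall j, j < h -> x0 j = sval M j.
  move=> j Hj; rewrite /x0 upd_other; last first.
    by move=> E; move: Hj; rewrite -E ltnNge leqnSn.
  rewrite upd_other; last by move=> E; move: Hj; rewrite E ltnn.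
  by rewrite /f0 Hj.
have x0h : x0 h = g.
  by rewrite /x0 upd_other ?upd_same // => E; move: (n_Sn h); rewrite E.
have x0h1 : x0 h.+1 = e by rewrite /x0 upd_same.
have x0hi : forall j, h.+2 <= j -> x0 j = up j (vs (j - h.+2)).
  move=> j Hj; rewrite /x0 upd_other; last by move=> E; move: Hj; rewrite -E ltnn.
  rewrite upd_other; last by move=> E; move: Hj; rewrite -E ltnNge leqnSn.
  by rewrite /f0 ltnNge (leq_trans (leqnSn h) (ltnW Hj)).
have Hpath : is_path x0.
  move=> j; case: (ltngtP j.+1 h) => Hj.
  - rewrite x0lo; last exact: ltn_trans (ltnSn j) Hj.
    by rewrite x0lo // (svalP M j).
  - have : h <= j by rewrite -ltnS.
    rewrite leq_eqVlt => /orP [/eqP Ejh|Hjh].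
      by rewrite -Ejh x0h x0h1 Hg.
    move: Hjh; rewrite leq_eqVlt => /orP [/eqP Ejh|Hjh].
      by rewrite -Ejh x0h1 x0hi // subnn /= up_src.
    rewrite (x0hi j Hjh) (x0hi j.+1 (leq_trans Hjh (leqnSn j))) up_src //.
    have -> : j.+1 - h.+2 = (j - h.+2).+1 by rewrite subSn.
    by rewrite /= subnKC.
  - rewrite x0lo; last by rewrite -Hj.
    rewrite HMr; subst h; rewrite x0h; symmetry; apply: Htv => //; by rewrite ltnS.
pose x := exist _ x0 Hpath : XB B.
have notmax : ~ pmax rk x.
  move=> Hm; have := Hm h.+1 e'; rewrite /= x0h1 => /(_ He'r) H.
  by have := leq_trans He'lt H; rewrite ltnn.
have [k [Hb [Hnm [Hs [Ha Hmin]]]]] := Hsucc notmax.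
have Ek : k = h.+1.
  case: (ltngtP k h.+1) => // Hk.
    exfalso; apply: Hnm; rewrite /=.
    move: Hk; rewrite ltnS leq_eqVlt => /orP [/eqP ->|Hk]; first by rewrite x0h.
    by rewrite x0lo //; apply: HM.
  by exfalso; have := Hb _ Hk e'; rewrite /= x0h1 => /(_ He'r) H;
     have := leq_trans He'lt H; rewrite ltnn.
subst k; move: Hs; rewrite /= x0h1 => -[Hr'' [Hlt'' Hmin'']].
have E'' : sval (phi x) h.+1 = e'.
  apply: rk_eq => //; first by rewrite Hr'' He'r.
  apply/eqP; rewrite eqn_leq; apply/andP; split.
    exact: Hmin'' e' He'r He'lt.
  exact: He'min _ Hr'' Hlt''.
have Hsrc : forall d, d < h -> src B (sval (phi x) (h - d)) = bv.
  elim=> [_|d IH Hd].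
    rewrite subn0; apply: Hbv; first exact: Hh.
      exact: etrans (svalP (phi x) h) (f_equal _ E'').
    by apply: Hmin.
  have Hd' : 1 <= h - d.+1 by rewrite subn_gt0.
  have E1 : (h - d.+1).+1 = h - d by rewrite subnSK // ltnW.
  apply: Hbb; first by rewrite ltnS.
    by rewrite (svalP (phi x) (h - d.+1)) E1 IH // ltnW.
  apply: Hmin; rewrite ltnS; exact: leq_subr.
have E0 : sval (phi x) 0 = sval (phi M) 0.
  by apply: Hc => j Hj; apply: x0lo; exact: leq_trans Hj HK0.
rewrite -E0; apply: etrans (svalP (phi x) 0) _.
have := Hsrc h.-1; have -> : h - h.-1 = 1 by lia.
apply; lia.
Qed.

Variables (tvf bvf : V -> V).
Hypothesis Htvf : forall w, inTV rk (tvf w) /\ tv_of rk w (tvf w).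
Hypothesis Hbvf : forall w, inBV rk (bvf w) /\ bv_of rk w (bvf w).

Lemma tv_uniq w t : tv_of rk w t -> t = tvf w.
Proof.
move=> H; have [e [He Hm]] := @exmax 2 isT w.
by rewrite -(H 2 isT e He Hm) -((Htvf w).2 2 isT e He Hm).
Qed.

Lemma bv_uniq w t : bv_of rk w t -> t = bvf w.
Proof.
move=> H; have [e [He Hm]] := @exmin 2 isT w.
by rewrite -(H 2 isT e He Hm) -((Hbvf w).2 2 isT e He Hm).
Qed.

Lemma tvf_idem w : tvf (tvf w) = tvf w.
Proof. symmetry; apply: tv_uniq; apply: tvT; exact: (Htvf w).1. Qed.

Lemma bvf_idem w : bvf (bvf w) = bvf w.
Proof. symmetry; apply: bv_uniq; apply: bvB; exact: (Hbvf w).1. Qed.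

Hypothesis Hcont : continuous phi.

Lemma exK : exists K, 1 <= K /\ forall h (e e' : edge B h.+2), K <= h ->
  succ_edge rk e e' -> sigma rk phi (tvf (src B e)) (bvf (src B e')).
Proof.
have : forall v, exists K0, inTV rk v -> exists M : XB B, pmax rk M /\
   (forall j, rng B (sval M j) = v) /\
   (forall y : XB B, (forall j, j < K0 -> sval y j = sval M j) ->
      sval (phi y) 0 = sval (phi M) 0).
  move=> v; case: (classic (inTV rk v)) => H; last by exists 0.
  have [M [HM HMr]] := maxpath H; have [K0 HK0] := Hcont M 1.
  exists K0 => _; exists M; do 2 split => //.
  by move=> y Hy; apply: HK0 Hy 0 isT.
move/functional_choice => [Kf HKf].
exists (\max_(v : V) Kf v).+1; split => // h e e' Hh Hs.
have [Hin _] := Htvf (src B e); have [M [HM [HMr HMc]]] := HKf _ Hin.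
exists M; split => //; split; first by exists 0; rewrite HMr.
exists 0; apply: (step_core HM HMr HMc _ _ Hs).
- apply: leq_trans (leq_bigmax _) _; exact: ltnW.
- exact: leq_trans Hh.
- exact: (Htvf _).2.
- exact: (Hbvf _).2.
- apply: bvB; exact: (Hbvf _).1.
Qed.

Definition cellv a := (bvf a, tvf a).
Definition Rv a b := Hreach rk phi (cellv a) (cellv b).

Lemma Hvc a : Hvert rk (cellv a).
Proof.
split; first exact: (Hbvf a).1. split; first exact: (Htvf a).1.
by exists a; split; [exact: (Htvf a).2 | exact: (Hbvf a).2].
Qed.

Lemma Hvert_cell t : Hvert rk t -> exists w, t = cellv w.
Proof.
case: t => a b [_ [_ [w [H1 H2]]]]; exists w.
by rewrite /cellv -(tv_uniq H1) -(bv_uniq H2).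
Qed.

Lemma Hreach_trans a b c : Hreach rk phi a b -> Hreach rk phi b c -> Hreach rk phi a c.
Proof.
elim=> [//|t t' t'' H1 H2 H3 _ IH] Hc; apply: Hreach_step H1 H2 H3 (IH Hc).
Qed.

Lemma Rv_trans a b c : Rv a b -> Rv b c -> Rv a c.
Proof. exact: Hreach_trans. Qed.

Lemma Rv_refl a : Rv a a.
Proof. apply: Hreach_refl; exact: Hvc. Qed.

Lemma Rv_step a b : sigma rk phi (tvf a) (bvf b) -> Rv a b.
Proof.
move=> H; apply: (Hreach_step (Hvc a) (Hvc b)) => //; exact: Rv_refl.
Qed.

Lemma Rv_step' a b : sigma rk phi (tvf a) (bvf b) -> Rv (tvf a) (bvf b).
Proof. by move=> H; apply: Rv_step; rewrite tvf_idem bvf_idem. Qed.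

Variable K : nat.
Hypothesis HK : forall h (e e' : edge B h.+2), K <= h ->
  succ_edge rk e e' -> sigma rk phi (tvf (src B e)) (bvf (src B e')).

Lemma L0 h (e0 e : edge B h.+2) : K <= h -> rng B e0 = rng B e -> rk e0 <= rk e ->
  Rv (src B e0) (src B e).
Proof.
move=> Hh; move: {2}(rk e).+1 (ltnSn (rk e)) => N; elim: N e => [//|N IH] e HN Hr Hle.
case: (ltngtP (rk e0) (rk e)) => [Hlt|Hgt|Heq].
- have [p [Hp0 Hs]] := pred_exists Hr Hlt.
  have [Hre [Hplt _]] := Hs.
  apply: Rv_trans (IH p _ _ Hp0) (Rv_step (HK Hh Hs)).
    exact: leq_trans Hplt _.
  by rewrite Hr Hre.
- by move: (leq_trans Hgt Hle); rewrite ltnn.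
- by rewrite (@rk_eq h.+2 _ _ isT Hr Heq); exact: Rv_refl.
Qed.

Lemma L1' s : Rv (bvf s) (tvf s).
Proof.
have [em [Hem Hmin]] := @exmin K.+2 isT s.
have [eM [HeM Hmax]] := @exmax K.+2 isT s.
rewrite -((Hbvf s).2 K.+2 isT em Hem Hmin) -((Htvf s).2 K.+2 isT eM HeM Hmax).
apply: L0 => //; first by rewrite Hem HeM.
by apply: Hmin; rewrite HeM.
Qed.

Lemma L0' h (e0 e : edge B h.+2) : K <= h -> rng B e0 = rng B e -> rk e0 < rk e ->
  Rv (tvf (src B e0)) (bvf (src B e)).
Proof.
move=> Hh; move: {2}(rk e).+1 (ltnSn (rk e)) => N; elim: N e => [//|N IH] e HN Hr Hlt.
have [p [Hp0 Hs]] := pred_exists Hr Hlt.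
have [Hre [Hplt _]] := Hs.
move: Hp0; rewrite leq_eqVlt => /orP [/eqP Heq|Hp0].
  have E : e0 = p by apply: rk_eq => //; rewrite Hr Hre.
  by subst; apply: Rv_step'; apply: HK Hs.
apply: Rv_trans (IH p _ _ Hp0) _.
- exact: leq_trans Hplt _.
- by rewrite Hr Hre.
apply: Rv_trans (L1' _) (Rv_step' (HK Hh Hs)).
Qed.

Lemma fibA h (e : edge B h.+2) y : K <= h -> rng B e = y ->
  Rv (bvf y) (src B e) /\ Rv (src B e) (tvf y).
Proof.
move=> Hh He.
have [em [Hem Hmin]] := @exmin h.+2 isT y.
have [eM [HeM Hmax]] := @exmax h.+2 isT y.
rewrite -{1}((Hbvf y).2 h.+2 isT em Hem Hmin) -((Htvf y).2 h.+2 isT eM HeM Hmax).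
split; apply: L0 => //.
- by rewrite Hem He.
- by apply: Hmin; rewrite He.
- by rewrite HeM He.
- by apply: Hmax; rewrite He.
Qed.

Lemma fibB h (e : edge B h.+2) y : K <= h -> rng B e = y ->
  Rv (bvf y) (bvf (src B e)) /\ Rv (tvf (src B e)) (tvf y).
Proof.
move=> Hh He.
have [em [Hem Hmin]] := @exmin h.+2 isT y.
have [eM [HeM Hmax]] := @exmax h.+2 isT y.
have Sm := (Hbvf y).2 h.+2 isT em Hem Hmin.
have SM := (Htvf y).2 h.+2 isT eM HeM Hmax.
split.
  have : rk em <= rk e by apply: Hmin; rewrite He.
  rewrite leq_eqVlt => /orP [/eqP Heq|Hlt].
    have E : em = e by apply: rk_eq => //; rewrite Hem He.
    by subst; rewrite Sm bvf_idem; exact: Rv_refl.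
  apply: Rv_trans _ (L0' Hh _ Hlt); last by rewrite Hem He.
  by have := L1' (src B em); rewrite Sm bvf_idem.
have : rk e <= rk eM by apply: Hmax; rewrite He.
rewrite leq_eqVlt => /orP [/eqP Heq|Hlt].
  have E : e = eM by apply: rk_eq => //; rewrite HeM He.
  by subst; rewrite SM tvf_idem; exact: Rv_refl.
apply: Rv_trans (L0' Hh _ Hlt) _; first by rewrite HeM He.
by have := L1' (src B eM); rewrite SM tvf_idem.
Qed.

Lemma block n : forall L y (p : forall k, edge B k), K.+1 <= L -> L < n ->
  finpath L n y p -> Rv (bvf y) (src B (p L.+1)) /\ Rv (src B (p L.+1)) (tvf y).
Proof.
elim: n => [//|n IH] L y p HL Hn [Hp1 Hp2].
move: Hn; rewrite ltnS leq_eqVlt => /orP [/eqP E|Hlt].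
  subst n; clear IH; case: L HL Hp1 Hp2 => [//|h] HL Hp1 Hp2.
  exact: fibA HL Hp2.
have Hfp : finpath L n (src B (p n.+1)) p.
  split; last by apply: Hp1; rewrite Hlt ltnSn.
  move=> k /andP [H1 H2]; apply: Hp1; rewrite H1 /=; exact: ltnW.
have [IH1 IH2] := IH L _ p HL Hlt Hfp.
case: n Hlt Hp1 Hp2 IH Hfp IH1 IH2 => [//|h] Hlt Hp1 Hp2 IH Hfp IH1 IH2.
have Hh : K <= h by move: HL Hlt; clear; lia.
have [B1 B2] := fibB Hh Hp2.
split; [exact: Rv_trans B1 IH1 | exact: Rv_trans IH2 B2].
Qed.

End Main.

Theorem mainTheorem8 (V : finType) (B : bratteli V)
    (rk : forall n, edge B n -> nat) (phi : XB B -> XB B) :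
  aperiodic B -> is_ordering rk -> is_vershik rk phi ->
  well_telescoped rk phi ->
  (simple B -> strongly_connected rk phi) /\
  (classA B -> weakly_connected rk phi).
Proof.
move=> _ Hord [[Hcont _] [Hsucc _]] [Hfib [Hvmax [Hvmin [Hiv _]]]].
have [tvf Htvf] : exists f : V -> V, forall w, inTV rk (f w) /\ tv_of rk w (f w).
  apply: (functional_choice (fun w f => inTV rk f /\ tv_of rk w f)) => w; have [tv [bv [H1 [_ [H3 _]]]]] := Hiv w; by exists tv.
have [bvf Hbvf] : exists f : V -> V, forall w, inBV rk (f w) /\ bv_of rk w (f w).
  apply: (functional_choice (fun w f => inBV rk f /\ bv_of rk w f)) => w; have [tv [bv [_ [H2 [_ H4]]]]] := Hiv w; by exists bv.
split.
- move=> Hs.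
  have Hup : forall i, 1 <= i -> forall w, exists e : edge B i.+1, src B e = w.
    move=> i Hi w; have [m [Hm Hall]] := Hs i; have [p [_ [H0|H]]] := Hall w w.
      by move: Hi; rewrite H0.
    by exists (p i.+1).
  have [K [HK1 HK]] := exK Hord Hfib Hvmax Hvmin Hsucc Hup Htvf Hbvf Hcont.
  move=> t t' /(Hvert_cell Hfib Htvf Hbvf) [w ->] /(Hvert_cell Hfib Htvf Hbvf) [w' ->].
  have [m [Hm Hall]] := Hs K.+1.
  case: m Hm Hall => [//|m] Hm Hall.
  have /card_gt1P [a [b [Ha Hb Hab]]] := Hfib m.+2 isT w.
  move: Ha Hb; rewrite !inE => /eqP Ha /eqP Hb.
  have [a' [b' [Hlt Hr]]] : exists a' b' : edge B m.+2, rk _ a' < rk _ b' /\ rng B a' = rng B b'.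
    case: (ltngtP (rk _ a) (rk _ b)) => H.
    - by exists a, b; rewrite Ha Hb.
    - by exists b, a; rewrite Ha Hb.
    - by move: Hab; rewrite (Hord m.+2 isT _ _ (etrans Ha (esym Hb)) H) eqxx.
  have [p [Hp Hpw]] := Hall w (src B a').
  have [q [Hq Hqw]] := Hall w' (src B b').
  case: Hpw => [//|Hpw]; case: Hqw => [//|Hqw].
  have [_ B1] := block Hord Hfib Hvmax Hvmin Htvf Hbvf HK (ltnSn K) Hm Hp.
  have [B2 _] := block Hord Hfib Hvmax Hvmin Htvf Hbvf HK (ltnSn K) Hm Hq.
  rewrite Hpw in B1; rewrite Hqw in B2.
  apply: Hreach_trans B1 _; apply: Hreach_trans _ B2.
  apply: (L0' Hord Hfib Hvmax Hvmin Htvf Hbvf HK _ Hr Hlt).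
  by move: Hm; clear; lia.
- move=> [k [lab [Hsize [Hinc [v0 Hv0]]]]].
  have Hcb : forall n, 1 <= n -> exists y, val (lab n y) = k.
    move=> n Hn; have := Hsize n ord_max Hn.
    have : 0 < #|[set v | lab 1 v == ord_max]|.
      apply/card_gt0P; exists v0; rewrite inE; apply/eqP/val_inj => //.
    move=> H1 H2; rewrite -H2 in H1; move/card_gt0P: H1 => [y]; rewrite inE => /eqP Hy.
    by exists y; rewrite Hy.
  have Hedge : forall n, 1 <= n -> forall y w, val (lab n.+1 y) = k ->
      exists e : edge B n.+1, src B e = w /\ rng B e = y.
    move=> n Hn y w Hy; have := (Hinc n Hn y w).2 Hy.
    move/card_gt0P => [e]; rewrite inE => /andP [/eqP H1 /eqP H2]; by exists e.
  have Hup : forall i, 1 <= i -> forall w, exists e : edge B i.+1, src B e = w.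
    move=> i Hi w; have [y Hy] := Hcb i.+1 isT.
    by have [e [He _]] := Hedge i Hi y w Hy; exists e.
  have [K [HK1 HK]] := exK Hord Hfib Hvmax Hvmin Hsucc Hup Htvf Hbvf Hcont.
  move=> t t' /(Hvert_cell Hfib Htvf Hbvf) [w ->] /(Hvert_cell Hfib Htvf Hbvf) [w' ->].
  have [y Hy] := Hcb K.+2 isT.
  have [e [He Hey]] := Hedge K.+1 isT y w Hy.
  have [e' [He' Hey']] := Hedge K.+1 isT y w' Hy.
  case: (leqP (rk _ e) (rk _ e')) => H.
    left; rewrite -He -He'; apply: (L0 Hord Htvf Hbvf HK (leqnn K)) => //.
    by rewrite Hey Hey'.
  right; rewrite -He -He'; apply: (L0 Hord Htvf Hbvf HK (leqnn K)) => //.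
    by rewrite Hey Hey'.
  exact: ltnW.
Qed.
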